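(* Let $m\in\mathbb{N}$ and $\beta\in(1,\frac{m+2}{2})$. Every $x$ in the interior of the switch region $[\frac{1}{\beta},\frac{(m-1)\beta+1}{\beta(\beta-1)}]$ lies in the interior of some choice interval.
   Context: For $i\in\{1,\ldots,m\}$ the $i$-th choice interval is $[\frac{i}{\beta},\frac{(i-1)\beta+m-(i-1)}{\beta(\beta-1)}]$. *)

(* Defs.v *)
From mathcomp Require Import all_boot all_order all_algebra.
From mathcomp Require Import reals.
Set Implicit Arguments. Unset Strict Implicit. Unset Printing Implicit Defensive.
Import Order.TTheory GRing.Theory Num.Theory.
Local Open Scope ring_scope.

Definition switch_lo (R : realType) (beta : R) : R := 1 / beta.
Definition switch_hi (R : realType) (m : nat) (beta : R) : R :=
  ((m%:R - 1) * beta + 1) / (beta * (beta - 1)).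

Definition choice_lo (R : realType) (beta : R) (i : nat) : R := i%:R / beta.
Definition choice_hi (R : realType) (m : nat) (beta : R) (i : nat) : R :=
  ((i%:R - 1) * beta + (m%:R - (i%:R - 1))) / (beta * (beta - 1)).

(* Main.v *)
Require Import Defs.
From mathcomp Require Import all_boot all_order all_algebra.
From mathcomp Require Import reals.
From mathcomp Require Import ring lra.
Import Order.TTheory GRing.Theory Num.Theory.
Local Open Scope ring_scope.

Lemma lo_eq (R : realType) (beta : R) (i : nat) : 1 < beta ->
  choice_lo beta i = (i%:R * (beta - 1)) / (beta * (beta - 1)).
Proof.
move=> b1; rewrite /choice_lo; field.
have h1 : beta != 0 by rewrite gt_eqF //; lra.
have h2 : beta - 1 != 0 by rewrite gt_eqF //; lra.
by rewrite h1 h2.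
Qed.

Lemma overlap (R : realType) (m : nat) (beta : R) (n : nat) :
  1 < beta -> beta < (m%:R + 2) / 2 ->
  choice_lo beta n.+1 < choice_hi m beta n.
Proof.
move=> b1 b2; rewrite lo_eq // /choice_hi.
have D : 0 < beta * (beta - 1) by apply: mulr_gt0; lra.
rewrite ltr_pM2r ?invr_gt0 //.
rewrite -natr1. lra.
Qed.

Theorem lemma2p5 (R : realType) (m : nat) (beta : R) :
  1 < beta -> beta < (m%:R + 2) / 2 ->
  forall x : R, x \in `]switch_lo beta, switch_hi m beta[ ->
  exists i : nat, (1 <= i <= m)%N /\
    x \in `]choice_lo beta i, choice_hi m beta i[.
Proof.
move=> b1 b2 x; rewrite in_itv /= => /andP [xl xh].
have m1 : (1 <= m)%N.
  case: m b2 {xh} => // b2; exfalso; move: b2; rewrite /=; lra.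
have hm : switch_hi m beta = choice_hi m beta m.
  by rewrite /switch_hi /choice_hi; congr (_ / _); ring.
have l1 : switch_lo beta = choice_lo beta 1 by rewrite /switch_lo /choice_lo.
rewrite hm in xh; rewrite l1 in xl.
suff: forall n, (1 <= n <= m)%N -> x < choice_hi m beta n ->
  exists i : nat, (1 <= i <= m)%N /\
    x \in `]choice_lo beta i, choice_hi m beta i[.
  by move=> /(_ m); apply => //; rewrite m1 leqnn.
elim=> [//|n IH] /andP [n1 nm] xn.
case: (ltnP 0 n) => n0.
  case: (Order.TotalTheory.ltP x (choice_hi m beta n)) => xn'.
    apply: IH => //; rewrite n0 /=; exact: ltnW.
  exists n.+1; split; first by rewrite nm.
  rewrite in_itv /= xn andbT.
  exact: lt_le_trans (@overlap R m beta n b1 b2) xn'.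
move: n0 xn; rewrite leqn0 => /eqP -> xn.
exists 1%N; split; first by rewrite leqnn m1.
by rewrite in_itv /= xl.
Qed.
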